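(* Let $(X,d)$ be a complete metric space, $N\in\mathbb{N}\setminus\{0\}$, $\mathcal{R}$ an $N$--transitive binary relation on $X$, and $T:X\rightarrow X$ an $\mathcal{R}$--contractive mapping of Meir--Keeler type. Assume: (D1) $T$ is $\mathcal{R}$--preserving; (D2) there exists $x_{0}\in X$ with $x_{0}\mathcal{R}Tx_{0}$. If either (D3) $T$ is continuous, or (D4) $(X,d)$ is $(T,\mathcal{R})$--regular, then $T$ has a fixed point $x^{\ast}\in X$. If additionally (D5) $X$ is $\mathcal{R}$--connected, then $x^{\ast}$ is the unique fixed point of $T$ and $T^{n}x\rightarrow x^{\ast}$ as $n\rightarrow\infty$ for every $x\in X$.
   Context: $\mathbb{N}$ is the set of non-negative integers; $T^n$ is the $n$-th iterate. $T$ is $\mathcal{R}$--contractive of Meir--Keeler type if for every $\varepsilon>0$ there exists $\delta(\varepsilon)>0$ such that for all $x,y\in X$ with $x\mathcal{R}y$ and $\varepsilon\leq d(x,y)<\varepsilon+\delta(\varepsilon)$ one has $d(Tx,Ty)<\varepsilon$. $T$ is $\mathcal{R}$--preserving if $x\mathcal{R}y$ implies $Tx\mathcal{R}Ty$. $\mathcal{R}$ is $N$--transitive if for all $x_0,\dots,x_{N+1}\in X$ with $x_i\mathcal{R}x_{i+1}$ for all $i\in\{0,\dots,N\}$ one has $x_0\mathcal{R}x_{N+1}$. A sequence $\{x_n\}$ is $(T,\mathcal{R})$--orbital if $x_n=T^nx_0$ and $x_n\mathcal{R}x_{n+1}$ for all $n$. $(X,d)$ is $(T,\mathcal{R})$--regular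 if for every $(T,\mathcal{R})$--orbital sequence $\{x_n\}$ with $x_n\rightarrow x\in X$ there is a subsequence $\{x_{n(k)}\}$ with $x_{n(k)}\mathcal{R}x$ for all $k$. An $\mathcal{R}$--chain from $x$ to $y$ is $(z_0,\dots,z_n)$ with $z_0=x$, $z_n=y$ and $z_{i-1}\mathcal{R}z_i$ or $z_i\mathcal{R}z_{i-1}$ for each $i\in\{1,\dots,n\}$; $X$ is $\mathcal{R}$--connected if for all $x\neq y$ there is an $\mathcal{R}$--chain from $x$ to $y$. *)

(* Defs.v *)
From Stdlib Require Import Reals.
Open Scope R_scope.

Definition is_metric {X : Type} (d : X -> X -> R) : Prop :=
  (forall x y, 0 <= d x y) /\
  (forall x y, d x y = 0 <-> x = y) /\
  (forall x y, d x y = d y x) /\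
  (forall x y z, d x z <= d x y + d y z).

Definition seq_conv {X : Type} (d : X -> X -> R) (u : nat -> X) (l : X) : Prop :=
  forall eps, 0 < eps -> exists N0 : nat, forall n, (N0 <= n)%nat -> d (u n) l < eps.

Definition cauchy_seq {X : Type} (d : X -> X -> R) (u : nat -> X) : Prop :=
  forall eps, 0 < eps -> exists N0 : nat,
    forall m n, (N0 <= m)%nat -> (N0 <= n)%nat -> d (u m) (u n) < eps.

Definition complete_metric {X : Type} (d : X -> X -> R) : Prop :=
  forall u : nat -> X, cauchy_seq d u -> exists l, seq_conv d u l.

Definition metric_continuous {X : Type} (d : X -> X -> R) (T : X -> X) : Prop :=
  forall x eps, 0 < eps -> exists delta, 0 < delta /\
    forall y, d x y < delta -> d (T x) (T y) < eps.

Definition MK_contractive {X : Type} (d : X -> X -> R) (Rl : X -> X -> Prop)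
  (T : X -> X) : Prop :=
  forall eps, 0 < eps -> exists delta, 0 < delta /\
    forall x y, Rl x y -> eps <= d x y -> d x y < eps + delta -> d (T x) (T y) < eps.

Definition R_preserving {X : Type} (Rl : X -> X -> Prop) (T : X -> X) : Prop :=
  forall x y, Rl x y -> Rl (T x) (T y).

Definition N_transitive {X : Type} (N : nat) (Rl : X -> X -> Prop) : Prop :=
  forall z : nat -> X, (forall i, (i <= N)%nat -> Rl (z i) (z (S i))) -> Rl (z 0%nat) (z (S N)).

Definition iterT {X : Type} (T : X -> X) (n : nat) (x : X) : X := Nat.iter n T x.

Definition TR_orbital {X : Type} (Rl : X -> X -> Prop) (T : X -> X) (u : nat -> X) : Prop :=
  forall n, u n = iterT T n (u 0%nat) /\ Rl (u n) (u (S n)).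

Definition TR_regular {X : Type} (d : X -> X -> R) (Rl : X -> X -> Prop) (T : X -> X) : Prop :=
  forall (u : nat -> X) (x : X), TR_orbital Rl T u -> seq_conv d u x ->
    exists phi : nat -> nat, (forall k, (phi k < phi (S k))%nat) /\
      forall k, Rl (u (phi k)) x.

Definition R_chain {X : Type} (Rl : X -> X -> Prop) (x y : X) (n : nat) (z : nat -> X) : Prop :=
  z 0%nat = x /\ z n = y /\
  forall i, (1 <= i <= n)%nat -> Rl (z (i - 1)%nat) (z i) \/ Rl (z i) (z (i - 1)%nat).

Definition R_connected {X : Type} (Rl : X -> X -> Prop) : Prop :=
  forall x y : X, x <> y -> exists (n : nat) (z : nat -> X), R_chain Rl x y n z.

(* Main.v *)
Require Import Defs.
From Stdlib Require Import Reals Lra Lia Classical.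
Open Scope R_scope.

Lemma zero_dist {X} (d : X -> X -> R) a b : is_metric d ->
  (forall eps, 0 < eps -> d a b < eps) -> a = b.
Proof.
  intros [H0 [H1 _]] H. apply H1.
  destruct (Req_dec (d a b) 0) as [E|E]; auto.
  specialize (H (d a b)). specialize (H0 a b). assert (0 < d a b) by lra.
  specialize (H H2). lra.
Qed.

Lemma nonexp {X} (d : X -> X -> R) Rl T x y : is_metric d -> MK_contractive d Rl T ->
  Rl x y -> d (T x) (T y) <= d x y.
Proof.
  intros Hm HMK Hr. destruct Hm as [H0 [H1 _]].
  destruct (Req_dec (d x y) 0) as [E|E].
  - apply H1 in E. subst. assert (d (T y) (T y) = 0) by (apply H1; auto). assert (d y y = 0) by (apply H1; auto). lra.
  - assert (P : 0 < d x y) by (specialize (H0 x y); lra).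
    destruct (HMK _ P) as [de [Hde Hk]].
    left. apply Hk; [exact Hr|lra|lra].
Qed.

Lemma iter_rel {X} Rl (T : X -> X) a b k : R_preserving Rl T -> Rl a b ->
  Rl (iterT T k a) (iterT T k b).
Proof.
  intros Hp Hr. induction k; simpl; auto.
Qed.

Lemma L0 {X} (d : X -> X -> R) Rl T a b : is_metric d -> MK_contractive d Rl T ->
  R_preserving Rl T -> Rl a b ->
  forall eps, 0 < eps -> exists K, forall k, (K <= k)%nat ->
    d (iterT T k a) (iterT T k b) < eps.
Proof.
  intros Hm HMK Hp Hr.
  set (s := fun k => d (iterT T k a) (iterT T k b)).
  assert (Hdec : Un_decreasing s).
  { intro n. unfold s. simpl. apply (nonexp d Rl); auto. apply iter_rel; auto. }
  assert (Hlb : has_lb s).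
  { exists 0. intros x [i ->]. unfold opp_seq, s. destruct Hm as [H0 _].
    specialize (H0 (iterT T i a) (iterT T i b)). lra. }
  destruct (decreasing_cv s Hdec Hlb) as [r Hr'].
  pose proof (decreasing_ineq s r Hdec Hr') as Hge.
  assert (r0 : 0 <= r).
  { destruct (Rle_or_lt 0 r); auto.
    destruct (Hr' (- r)) as [K HK]; [lra|]. specialize (HK K (le_n _)).
    unfold Rdist in HK. destruct Hm as [H0 _]. unfold s in HK.
    specialize (H0 (iterT T K a) (iterT T K b)).
    apply Rabs_def2 in HK. lra. }
  destruct r0 as [rp | r0].
  - exfalso. destruct (HMK r rp) as [de [Hde Hk]].
    destruct (Hr' de Hde) as [K HK]. specialize (HK K (le_n _)).
    unfold Rdist in HK. apply Rabs_def2 in HK.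
    pose proof (Hge (S K)) as HS. unfold s in HS. simpl in HS.
    assert (d (T (iterT T K a)) (T (iterT T K b)) < r).
    { pose proof (Hge K) as HgK. unfold s in HgK, HK.
      apply Hk; [apply iter_rel; auto | lra | lra]. }
    lra.
  - subst r. intros eps He. destruct (Hr' eps He) as [K HK]. exists K.
    intros k Hk. specialize (HK k Hk). unfold Rdist in HK. apply Rabs_def2 in HK.
    unfold s in HK. lra.
Qed.

Definition tends0 {X} (d : X -> X -> R) (T : X -> X) a b :=
  forall eps, 0 < eps -> exists K, forall k, (K <= k)%nat ->
    d (iterT T k a) (iterT T k b) < eps.

Lemma tends0_trans {X} (d : X -> X -> R) T a b c : is_metric d ->
  tends0 d T a b -> tends0 d T b c -> tends0 d T a c.
Proof.
  intros Hm H1 H2 eps He.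
  destruct (H1 (eps/2)) as [K1 HK1]; [lra|].
  destruct (H2 (eps/2)) as [K2 HK2]; [lra|].
  exists (K1 + K2)%nat. intros k Hk.
  destruct Hm as [_ [_ [_ Ht]]].
  specialize (HK1 k ltac:(lia)). specialize (HK2 k ltac:(lia)).
  pose proof (Ht (iterT T k a) (iterT T k b) (iterT T k c)). lra.
Qed.

Lemma tends0_sym {X} (d : X -> X -> R) T a b : is_metric d ->
  tends0 d T a b -> tends0 d T b a.
Proof.
  intros Hm H eps He. destruct (H eps He) as [K HK]. exists K. intros k Hk.
  destruct Hm as [_ [_ [Hs _]]]. rewrite Hs. auto.
Qed.

Lemma chain_tends {X} (d : X -> X -> R) Rl T x y n z : is_metric d ->
  MK_contractive d Rl T -> R_preserving Rl T -> R_chain Rl x y n z ->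
  tends0 d T x y.
Proof.
  intros Hm HMK Hp [Hz0 [Hzn Hl]].
  assert (forall i, (i <= n)%nat -> tends0 d T x (z i)).
  { induction i; intros Hi.
    - rewrite Hz0. intros eps He. exists 0%nat. intros k _.
      destruct Hm as [_ [H1 _]]. assert (d (iterT T k x) (iterT T k x) = 0) by (apply H1; auto).
      lra.
    - apply tends0_trans with (z i); auto. apply IHi; lia.
      destruct (Hl (S i) ltac:(lia)) as [HH|HH]; replace (S i - 1)%nat with i in HH by lia.
      + intros eps He. apply (L0 d Rl); auto.
      + apply tends0_sym; auto. intros eps He. apply (L0 d Rl); auto. }
  rewrite <- Hzn. auto.
Qed.

Lemma orbit_cauchy {X} (d : X -> X -> R) (N : nat) Rl T x0 : is_metric d ->
  (0 < N)%nat -> N_transitive N Rl -> MK_contractive d Rl T -> R_preserving Rl T ->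
  Rl x0 (T x0) -> cauchy_seq d (fun n => iterT T n x0).
Proof.
  intros Hm HN Htr HMK Hp H0.
  set (x := fun n => iterT T n x0).
  assert (xS : forall n, x (S n) = T (x n)) by reflexivity.
  assert (Hc : forall n, Rl (x n) (x (S n))).
  { induction n; auto. rewrite !xS. apply Hp; auto. }
  assert (Hj : forall n j, Rl (x n) (x (n + 1 + j * N)%nat)).
  { intros n j. induction j.
    - replace (n + 1 + 0 * N)%nat with (S n) by lia. auto.
    - set (z := fun i => match i with 0%nat => x n | S i' => x (n + 1 + j * N + i')%nat end).
      assert (Rl (z 0%nat) (z (S N))).
      { apply Htr. intros i Hi. destruct i; simpl.
        - replace (n + 1 + j * N + 0)%nat with (n + 1 + j * N)%nat by lia. auto.
        - replace (n + 1 + j * N + S i)%nat with (S (n + 1 + j * N + i)) by lia. auto. }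
      simpl in H. replace (n + 1 + S j * N)%nat with (n + 1 + j * N + N)%nat by lia. auto. }
  assert (Hsh : forall a b k, Rl (x a) (x b) ->
     Rl (x (a + k)%nat) (x (b + k)%nat) /\ d (x (a + k)%nat) (x (b + k)%nat) <= d (x a) (x b)).
  { intros a b k Hr. induction k.
    - rewrite !Nat.add_0_r. split; auto. lra.
    - rewrite !Nat.add_succ_r, !xS. destruct IHk as [IH1 IH2]. split.
      + apply Hp; auto.
      + pose proof (nonexp d Rl T _ _ Hm HMK IH1). lra. }
  destruct Hm as [Hd0 [Hd1 [Hds Hdt]]].
  assert (Hm : is_metric d) by (repeat split; auto; apply Hd1).
  intros eps' Heps'. set (eps := eps' / 4).
  assert (Heps : 0 < eps) by (unfold eps; lra).
  destruct (HMK eps Heps) as [dm [Hdm Hk]].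
  set (de := Rmin dm eps).
  assert (Hde1 : de <= dm) by apply Rmin_l.
  assert (Hde2 : de <= eps) by apply Rmin_r.
  assert (Hde0 : 0 < de) by (apply Rmin_pos; auto).
  assert (HNr : 0 < INR N) by (apply lt_0_INR; auto).
  set (eta := de / (2 * INR N)).
  assert (Heta : 0 < eta) by (unfold eta; apply Rdiv_lt_0_compat; lra).
  assert (HNeta : INR N * eta = de / 2) by (unfold eta; field; lra).
  destruct (L0 d Rl T x0 (T x0) Hm HMK Hp H0 eta Heta) as [n0 Hn0].
  assert (Hcn : forall k, (n0 <= k)%nat -> d (x k) (x (S k)) < eta).
  { intros k Hkk. apply Hn0 in Hkk.
    assert (E : iterT T k (T x0) = x (S k)).
    { unfold x, iterT. rewrite Nat.iter_succ_r. reflexivity. }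
    rewrite E in Hkk. exact Hkk. }
  assert (Hsum : forall n p, (n0 <= n)%nat -> d (x n) (x (n + p)%nat) <= INR p * eta).
  { intros n p Hn. induction p.
    - rewrite Nat.add_0_r. rewrite (proj2 (Hd1 _ _) eq_refl). simpl. lra.
    - rewrite Nat.add_succ_r, S_INR. pose proof (Hcn (n + p)%nat ltac:(lia)).
      pose proof (Hdt (x n) (x (n + p)%nat) (x (S (n + p)))). lra. }
  assert (HsumN : forall n p, (n0 <= n)%nat -> (p <= N)%nat -> d (x n) (x (n + p)%nat) <= de / 2).
  { intros n p Hn Hp'. pose proof (Hsum n p Hn). apply le_INR in Hp'.
    rewrite <- HNeta. assert (INR p * eta <= INR N * eta) by (apply Rmult_le_compat_r; lra). lra. }
  assert (Hmain : forall n j, (n0 <= n)%nat -> d (x n) (x (n + 1 + j * N)%nat) < eps + de / 2).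
  { intros n j Hn. induction j.
    - replace (n + 1 + 0 * N)%nat with (n + 1)%nat by lia.
      pose proof (HsumN n 1%nat Hn ltac:(lia)). lra.
    - set (m := (n + 1 + j * N)%nat) in *.
      assert (Hr := Hj n j). fold m in Hr.
      assert (H1 : d (x (S n)) (x (S m)) < eps).
      { rewrite !xS. destruct (Rle_or_lt eps (d (x n) (x m))).
        - apply Hk; auto. lra.
        - pose proof (nonexp d Rl T _ _ Hm HMK Hr). lra. }
      assert (Hr1 : Rl (x (S n)) (x (S m))) by (rewrite !xS; apply Hp; auto).
      destruct (Hsh (S n) (S m) (N - 1)%nat Hr1) as [_ H2].
      replace (S n + (N - 1))%nat with (n + N)%nat in H2 by lia.
      replace (S m + (N - 1))%nat with (m + N)%nat in H2 by lia.
      replace (n + 1 + S j * N)%nat with (m + N)%nat by (unfold m; lia).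
      pose proof (HsumN n N Hn (le_n _)).
      pose proof (Hdt (x n) (x (n + N)%nat) (x (m + N)%nat)). lra. }
  exists n0. 
  assert (Hle : forall m n, (n0 <= n)%nat -> (n <= m)%nat -> d (x m) (x n) < eps').
  { intros m n Hn Hnm. rewrite Hds.
    destruct (Nat.eq_dec n m) as [E|E].
    - subst. rewrite (proj2 (Hd1 _ _) eq_refl). lra.
    - set (q := (m - n - 1)%nat).
      pose proof (Nat.div_mod q N ltac:(lia)) as Hq.
      pose proof (Nat.mod_upper_bound q N ltac:(lia)) as Hr.
      set (j := (q / N)%nat) in *. set (r := (q mod N)%nat) in *.
      pose proof (Hmain n j Hn).
      pose proof (HsumN (n + 1 + j * N)%nat r ltac:(lia) ltac:(lia)).
      replace (n + 1 + j * N + r)%nat with m in H1 by (unfold q in Hq; lia).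
      pose proof (Hdt (x n) (x (n + 1 + j * N)%nat) (x m)).
      unfold eps in *. lra. }
  intros m n Hm' Hn'. destruct (Nat.le_ge_cases n m).
  - apply Hle; auto.
  - rewrite Hds. apply Hle; auto.
Qed.

Theorem corollary5 (X : Type) (d : X -> X -> R) (N : nat) (Rl : X -> X -> Prop) (T : X -> X) :
  is_metric d -> complete_metric d ->
  (0 < N)%nat -> N_transitive N Rl ->
  MK_contractive d Rl T ->
  R_preserving Rl T ->
  (exists x0 : X, Rl x0 (T x0)) ->
  (metric_continuous d T \/ TR_regular d Rl T) ->
  exists xs : X, T xs = xs /\
    (R_connected Rl ->
       (forall y : X, T y = y -> y = xs) /\
       (forall x : X, seq_conv d (fun n => iterT T n x) xs)).
Proof.
  intros Hm Hcomp HN Htr HMK Hp [x0 H0] Hcase.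
  pose proof (orbit_cauchy d N Rl T x0 Hm HN Htr HMK Hp H0) as Hc.
  destruct (Hcomp _ Hc) as [l Hl].
  set (x := fun n => iterT T n x0) in *.
  assert (xS : forall n, x (S n) = T (x n)) by reflexivity.
  assert (Hrel : forall n, Rl (x n) (x (S n))).
  { induction n; auto. rewrite !xS. apply Hp; auto. }
  pose proof Hm as [Hd0 [Hd1 [Hds Hdt]]].
  assert (Hfix : T l = l).
  { apply (zero_dist d); auto. intros eps He.
    destruct Hcase as [Hcont | Hreg].
    - destruct (Hcont l (eps/2)) as [de [Hde HH]]; [lra|].
      destruct (Hl (Rmin de (eps/2))) as [K HK]; [apply Rmin_pos; lra|].
      pose proof (HK K (le_n _)) as A. pose proof (HK (S K) ltac:(lia)) as B.
      pose proof (Rmin_l de (eps/2)). pose proof (Rmin_r de (eps/2)).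
      assert (C : d (T l) (T (x K)) < eps/2) by (apply HH; rewrite Hds; lra).
      rewrite xS in B. pose proof (Hdt (T l) (T (x K)) l). lra.
    - assert (Horb : TR_orbital Rl T x) by (intro n; split; auto).
      destruct (Hreg x l Horb Hl) as [phi [Hphi Hr]].
      assert (Hge : forall k, (k <= phi k)%nat).
      { induction k; [lia|]. specialize (Hphi k). lia. }
      destruct (Hl (eps/2)) as [K HK]; [lra|].
      pose proof (HK (phi K) (Hge K)) as A.
      pose proof (HK (S (phi K)) ltac:(specialize (Hge K); lia)) as B.
      rewrite xS in B. pose proof (nonexp d Rl T _ _ Hm HMK (Hr K)) as C.
      pose proof (Hdt (T l) (T (x (phi K))) l). rewrite (Hds (T l) (T (x (phi K)))) in H. lra. }
  exists l. split; auto. intros Hconn.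
  assert (Hiter : forall n, iterT T n l = l).
  { induction n; [reflexivity|]. change (T (iterT T n l) = l). rewrite IHn; auto. }
  assert (Hconv : forall y, seq_conv d (fun n => iterT T n y) l).
  { intros y eps He. destruct (classic (y = l)) as [E|E].
    - subst. exists 0%nat. intros n _. rewrite Hiter. rewrite (proj2 (Hd1 _ _) eq_refl). auto.
    - destruct (Hconn y l E) as [n [z Hz]].
      destruct (chain_tends d Rl T y l n z Hm HMK Hp Hz eps He) as [K HK].
      exists K. intros k Hk. specialize (HK k Hk). rewrite Hiter in HK. auto. }
  split; auto.
  intros y Hy. apply (zero_dist d); auto. intros eps He.
  destruct (Hconv y eps He) as [K HK]. specialize (HK K (le_n _)).
  assert (iterT T K y = y) by (clear HK; induction K; [reflexivity|]; change (T (iterT T K y) = y); rewrite IHK; auto).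
  simpl in HK. rewrite H in HK. auto.
Qed.
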